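(* Let $\mathcal{R}\subset\mathbb{R}_{>0}^n$ be a compact log-convex set and let $\ell:\mathcal{R}\to\mathbb{R}_{>0}$ be continuous. Then for every $\tilde\varepsilon>0$ there exist positive integers $p,q$ and a subtraction-free expression $E$ in $n$ variables $y_1,\dots,y_n$ such that the function $$f(\mathbf{x})=E(x_1^{1/q},\dots,x_n^{1/q})^{1/p}$$ (obtained by substituting $x_i^{1/q}$ for $y_i$) satisfies, for all $\mathbf{x}\in\mathcal{R}$, $$\left|\frac{\ell(\mathbf{x})-f(\mathbf{x})}{\min(\ell(\mathbf{x}),f(\mathbf{x}))}\right|\leqslant\tilde\varepsilon.$$
   Context: A set $\mathcal{R}\subset\mathbb{R}_{>0}^n$ is log-convex if its image under the entrywise logarithm is convex. A subtraction-free expression in variables $y_1,\dots,y_n$ is a formal term generated by the grammar $E\to E+E,\ E\times E,\ E/E,\ C,\ y_1,\dots,y_n$, where $C$ ranges over positive real constants (i.e., built from the variables and positive constants using only addition, multiplication and division, no subtraction); it is evaluated at positive arguments in the obvious way. *)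

(* Defs.v *)
From HB Require Import structures.
From mathcomp Require Import all_boot all_order all_algebra.
From mathcomp Require Import all_classical all_reals all_analysis.
Set Implicit Arguments. Unset Strict Implicit. Unset Printing Implicit Defensive.
Import Order.TTheory GRing.Theory Num.Theory.
Import numFieldNormedType.Exports.
Local Open Scope classical_set_scope.
Local Open Scope ring_scope.

Definition vlog {R : realType} {n : nat} (x : 'rV[R]_n) : 'rV[R]_n :=
  \row_i ln (x 0 i).

Definition convex_set {R : realType} {n : nat} (S : set 'rV[R]_n) : Prop :=
  forall u v, S u -> S v -> forall t : R, 0 <= t <= 1 ->
    S ((1 - t) *: u + t *: v).

Definition log_convex {R : realType} {n : nat} (A : set 'rV[R]_n) : Prop :=
  (forall x, A x -> forall i, 0 < x 0 i) /\ convex_set (vlog @` A).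

(* subtraction-free expressions in variables y_0 .. y_{n-1} *)
Inductive sfexpr (R : Type) (n : nat) : Type :=
| SFAdd : sfexpr R n -> sfexpr R n -> sfexpr R n
| SFMul : sfexpr R n -> sfexpr R n -> sfexpr R n
| SFDiv : sfexpr R n -> sfexpr R n -> sfexpr R n
| SFConst : R -> sfexpr R n
| SFVar : 'I_n -> sfexpr R n.

Fixpoint sf_pos_consts {R : realType} {n : nat} (E : sfexpr R n) : Prop :=
  match E with
  | SFAdd a b | SFMul a b | SFDiv a b => sf_pos_consts a /\ sf_pos_consts b
  | SFConst c => 0 < c
  | SFVar _ => True
  end.

Fixpoint sf_eval {R : realType} {n : nat} (E : sfexpr R n) (y : 'I_n -> R) : R :=
  match E with
  | SFAdd a b => sf_eval a y + sf_eval b y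
  | SFMul a b => sf_eval a y * sf_eval b y
  | SFDiv a b => sf_eval a y / sf_eval b y
  | SFConst c => c
  | SFVar i => y i
  end.

(* Main.v *)
Set Warnings "-all".
Require Import Defs.
From HB Require Import structures.
From mathcomp Require Import all_boot all_order all_algebra.
From mathcomp Require Import all_classical all_reals all_analysis.
From mathcomp Require Import finmap.
From mathcomp Require Import ring lra.
Import Order.TTheory GRing.Theory Num.Theory.
Import numFieldNormedType.Exports.
Local Open Scope classical_set_scope.
Local Open Scope ring_scope.
Set Implicit Arguments. Unset Strict Implicit. Unset Printing Implicit Defensive.

Section Aux.
Variables (R : realType) (n : nat).
Implicit Types x a b : 'rV[R]_n.

Lemma sf_eval_pos (E : sfexpr R n) (y : 'I_n -> R) :
  sf_pos_consts E -> (forall i, 0 < y i) -> 0 < sf_eval E y.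
Proof.
move=> + yp; elim: E => [a IHa b IHb|a IHa b IHb|a IHa b IHb|c|i] /=.
- by case=> /IHa ? /IHb ?; exact: addr_gt0.
- by case=> /IHa ? /IHb ?; exact: mulr_gt0.
- by case=> /IHa ? /IHb ?; apply: divr_gt0.
- by [].
- by move=> _; exact: yp.
Qed.

Definition posv x := forall i, 0 < x 0 i.

Definition Mi x a i := Num.max (x 0 i / a 0 i) (a 0 i / x 0 i).
Definition T x a := \big[Num.max/1]_(i < n) Mi x a i.

Lemma T_ge1 x a : 1 <= T x a.
Proof.
rewrite /T; elim/big_rec: _ => //= i u _ hu.
by rewrite le_max hu orbT.
Qed.

Lemma Mi_leT x a i : Mi x a i <= T x a.
Proof.
rewrite /T (bigD1 i) //= le_max lexx //.
Qed.

Lemma T_le x a c : 1 <= c -> (forall i, Mi x a i <= c) -> T x a <= c.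
Proof.
move=> c1 h; rewrite /T; elim/big_rec: _ => //= i u _ hu.
by rewrite ge_max hu h.
Qed.

Lemma T_sym x a : T x a = T a x.
Proof. by apply: eq_bigr => i _; rewrite /Mi maxC. Qed.

Lemma Mi_pos x a i : posv x -> posv a -> 0 < Mi x a i.
Proof.
move=> px pa; rewrite /Mi lt_max divr_gt0 //.
Qed.

Lemma T_tri x a b : posv x -> posv a -> posv b -> T x b <= T x a * T a b.
Proof.
move=> px pa pb; apply: T_le.
  by rewrite -[1]mulr1; apply: ler_pM => //; apply: T_ge1.
move=> i; have h1 := Mi_leT x a i; have h2 := Mi_leT a b i.
have xi := px i; have ai := pa i; have bi := pb i.
apply: le_trans (ler_pM _ _ h1 h2); last 2 first.
- exact/ltW/Mi_pos.
- exact/ltW/Mi_pos.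
rewrite /Mi ge_max; apply/andP; split.
- have -> : x 0 i / b 0 i = (x 0 i / a 0 i) * (a 0 i / b 0 i).
    by field; apply/andP; split; apply/lt0r_neq0.
  apply: ler_pM; [by rewrite divr_ge0 // ltW|by rewrite divr_ge0 // ltW|by rewrite /Mi le_max lexx ?orbT|by rewrite /Mi le_max lexx ?orbT].
- have -> : b 0 i / x 0 i = (a 0 i / x 0 i) * (b 0 i / a 0 i).
    by field; apply/andP; split; apply/lt0r_neq0.
  apply: ler_pM; [by rewrite divr_ge0 // ltW|by rewrite divr_ge0 // ltW|by rewrite /Mi le_max lexx ?orbT|by rewrite /Mi le_max lexx ?orbT].
Qed.

Lemma T_small x a c i : posv x -> posv a -> T x a < c ->
  x 0 i < c * a 0 i /\ a 0 i < c * x 0 i.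
Proof.
move=> px pa h; have := le_lt_trans (Mi_leT x a i) h.
rewrite /Mi gt_max => /andP[h1 h2].
have xi := px i; have ai := pa i.
by split; rewrite -ltr_pdivrMr // ?(lt_le_trans _ h1) ?(lt_le_trans _ h2).
Qed.

Definition D (N : nat) x a :=
  1 + \sum_(i < n) ((x 0 i / a 0 i) ^+ N + (a 0 i / x 0 i) ^+ N).

Lemma D_ge1 N x a : posv x -> posv a -> 1 <= D N x a.
Proof.
move=> px pa; rewrite /D lerDl sumr_ge0 // => i _.
by rewrite addr_ge0 // exprn_ge0 // divr_ge0 // ltW.
Qed.

Lemma D_lower N x a : posv x -> posv a -> T x a ^+ N <= D N x a.
Proof.
move=> px pa.
suff : 0 <= T x a /\ T x a ^+ N <= D N x a by case.
rewrite /T; elim/big_ind: _ => //=.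
- by rewrite expr1n D_ge1.
- move=> u v [u0 hu] [v0 hv]; rewrite maxEle; by case: ifP.
move=> i _; rewrite /Mi maxEle.
have hs : forall j, 0 <= (x 0 j / a 0 j) ^+ N + (a 0 j / x 0 j) ^+ N.
  by move=> j; rewrite addr_ge0 // exprn_ge0 // divr_ge0 // ltW.
have hi : (x 0 i / a 0 i) ^+ N + (a 0 i / x 0 i) ^+ N <= D N x a.
  rewrite /D (bigD1 i) //= addrCA lerDl addr_ge0 //.
  by rewrite sumr_ge0.
have g1 : 0 <= (x 0 i / a 0 i) ^+ N by rewrite exprn_ge0 // divr_ge0 // ltW.
have g2 : 0 <= (a 0 i / x 0 i) ^+ N by rewrite exprn_ge0 // divr_ge0 // ltW.
case: ifP => _; split.
- by rewrite divr_ge0 // ltW.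
- by apply: le_trans hi; rewrite lerDr.
- by rewrite divr_ge0 // ltW.
- by apply: le_trans hi; rewrite lerDl.
Qed.

Lemma D_upper N x a : posv x -> posv a ->
  D N x a <= (1 + 2 * n%:R) * T x a ^+ N.
Proof.
move=> px pa; set t := T x a ^+ N.
have t1 : 1 <= t by rewrite exprn_ege1 // T_ge1.
have h : forall i, (x 0 i / a 0 i) ^+ N + (a 0 i / x 0 i) ^+ N <= t + t.
  move=> i; have := Mi_leT x a i; rewrite /Mi ge_max => /andP[h1 h2].
  have T0 : 0 <= T x a by apply: le_trans (T_ge1 x a).
  have xi := px i; have ai := pa i.
  by apply: lerD; apply: lerXn2r => //; rewrite nnegrE // divr_ge0 // ltW.
have hs : \sum_(i < n) ((x 0 i / a 0 i) ^+ N + (a 0 i / x 0 i) ^+ N) <= \sum_(i < n) (t + t).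
  by apply: ler_sum => i _; exact: h.
rewrite /D; apply: le_trans (lerD (lexx 1) hs) _.
rewrite sumr_const card_ord -[(t + t) *+ n]mulr_natr.
have n0 : 0 <= (n%:R : R) by [].
nra.
Qed.

End Aux.
Section Core.
Variable R : realType.

Lemma sum_const_seq (I : Type) (s : seq I) (c : R) :
  \sum_(j <- s) c = (size s)%:R * c.
Proof.
elim: s => [|a s IH]; first by rewrite big_nil mul0r.
by rewrite big_cons IH /= -add1n natrD mulrDl mul1r.
Qed.

Lemma le_sum_seq (I : eqType) (s : seq I) (w : I -> R) (i0 : I) :
  i0 \in s -> (forall j, j \in s -> 0 <= w j) -> w i0 <= \sum_(j <- s) w j.
Proof.
elim: s => [|a s IH] //= hi hw.
rewrite big_cons; move: hi; rewrite in_cons => /orP[/eqP->|hi].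
  rewrite lerDl big_seq_cond sumr_ge0 // => j /andP[hj _].
  by apply: hw; rewrite in_cons hj orbT.
apply: le_trans (IH hi _) _.
  by move=> j hj; apply: hw; rewrite in_cons hj orbT.
by rewrite lerDr hw // in_cons eqxx.
Qed.

Lemma core (I : eqType) (s : seq I) (w v : I -> R) (L psi K eta : R) (i0 : I) :
  i0 \in s -> (forall j, j \in s -> 0 < w j) -> (forall j, j \in s -> 0 <= v j) ->
  0 < L -> 0 <= eta -> 0 <= K -> 0 <= psi ->
  (forall j, j \in s -> (v j <= psi * L /\ L <= psi * v j) \/ w j <= eta * w i0) ->
  (forall j, j \in s -> v j <= K * L) ->
  L <= psi * v i0 ->
  \sum_(j <- s) v j * w j <= (psi + (size s)%:R * K * eta) * L * \sum_(j <- s) w j /\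
  L * \sum_(j <- s) w j <= psi * (1 + (size s)%:R * eta) * \sum_(j <- s) v j * w j.
Proof.
move=> hi hw hv L0 e0 K0 p0 hc hK hvi.
have wi0 := hw _ hi.
have Wge : w i0 <= \sum_(j <- s) w j.
  by apply: le_sum_seq => // j hj; exact/ltW/hw.
have Sge : v i0 * w i0 <= \sum_(j <- s) v j * w j.
  apply: (@le_sum_seq _ s (fun j => v j * w j)) => // j hj.
  by apply: mulr_ge0; [exact: hv|exact/ltW/hw].
split.
- have h1 : \sum_(j <- s) v j * w j <= \sum_(j <- s) (psi * L * w j + K * L * eta * w i0).
    rewrite big_seq_cond [X in _ <= X]big_seq_cond.
    apply: ler_sum => j /andP[hj _].
    have wj := hw _ hj; have vj := hv _ hj; have kj := hK _ hj.
    case: (hc _ hj) => [[g1 g2]|b].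
    + have : 0 <= K * L * eta * w i0 by rewrite !mulr_ge0 // ltW.
      nra.
    + have : 0 <= psi * L * w j by rewrite !mulr_ge0 // ltW.
      nra.
  apply: (le_trans h1); rewrite big_split /= -big_distrr /= sum_const_seq.
  have : 0 <= (size s)%:R :> R by [].
  set W := \sum_(j <- s) w j; set n := (size s)%:R.
  move=> n0; have c0 : 0 <= n * K * L * eta by rewrite !mulr_ge0 // ltW.
  have c1 : n * K * L * eta * w i0 <= n * K * L * eta * W by rewrite ler_wpM2l.
  nra.
- have h1 : \sum_(j <- s) L * w j <= \sum_(j <- s) (psi * (v j * w j) + L * eta * w i0).
    rewrite big_seq_cond [X in _ <= X]big_seq_cond.
    apply: ler_sum => j /andP[hj _].
    have wj := hw _ hj; have vj := hv _ hj.
    case: (hc _ hj) => [[g1 g2]|b].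
    + have : 0 <= L * eta * w i0 by rewrite !mulr_ge0 // ltW.
      nra.
    + have : 0 <= psi * (v j * w j) by rewrite !mulr_ge0 // ltW.
      nra.
  rewrite big_distrr /=; apply: (le_trans h1).
  rewrite big_split /= -big_distrr /= sum_const_seq.
  have : 0 <= (size s)%:R :> R by [].
  set S := \sum_(j <- s) v j * w j; set n := (size s)%:R.
  move=> n0; have c0 : 0 <= n * eta by rewrite !mulr_ge0.
  have c1 : L * w i0 <= psi * S.
    have : L * w i0 <= psi * v i0 * w i0 by rewrite ler_pM2r.
    have : psi * (v i0 * w i0) <= psi * S by rewrite ler_wpM2l.
    move=> hB hA; apply: le_trans hA _; by rewrite -mulrA.
  nra.
Qed.

Lemma pow_big (s M : R) : 1 < s -> exists N : nat, M <= s ^+ N.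
Proof.
move=> s1.
have bern : forall N : nat, 1 + N%:R * (s - 1) <= s ^+ N.
  elim=> [|N IH]; first by rewrite mul0r addr0 expr0.
  rewrite exprS.
  have : 0 <= (N%:R : R) by [].
  rewrite -natr1 => n0.
  have h1 : s * (1 + N%:R * (s - 1)) <= s * s ^+ N by rewrite ler_wpM2l // ltW // (lt_trans ltr01).
  have h2 : 0 <= N%:R * (s - 1) * (s - 1) by rewrite !mulr_ge0 // subr_ge0 ltW.
  nra.
have h0 : 0 <= Num.max 0 (M / (s - 1)) by rewrite le_max lexx.
have := archi_boundP h0; set N := Num.Def.archi_bound _ => hN.
exists N; apply: le_trans (bern N).
have : M / (s - 1) <= Num.max 0 (M / (s - 1)) by rewrite le_max lexx orbT.
have sp : 0 < s - 1 by rewrite subr_gt0.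
rewrite ler_pdivrMr //.
nra.
Qed.

End Core.

Section Cont.
Variables (R : realType) (n : nat).

Lemma cont_pt (A : set 'rV[R]_n) (l : 'rV[R]_n -> R) :
  {within A, continuous l} -> forall a, A a -> forall e : R, 0 < e ->
  exists2 r : R, 0 < r & forall x, A x -> (forall i, `|a 0 i - x 0 i| < r) -> `|l a - l x| < e.
Proof.
move=> cl a Aa e e0.
have := (proj1 (subspace_continuousP _ _) cl) a Aa.
move=> /(_ (ball (l a) e)) H.
have /H : nbhs (l a) (ball (l a) e) by apply: nbhsx_ballx.
rewrite /= nbhs_simpl /= => /nbhs_ballP [r r0 Hr].
exists r => // x Ax Hx.
have : ball (l a) e (l x).
  apply: Hr => //.
  by split => // i j; rewrite (ord1 i); rewrite -ball_normE /=; exact: Hx.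
by rewrite -ball_normE.
Qed.

Lemma T_ball (a : 'rV[R]_n) (s : R) : posv a -> 1 < s ->
  exists2 r : R, 0 < r & forall x : 'rV[R]_n, (forall i, `|a 0 i - x 0 i| < r) -> posv x /\ T x a < s.
Proof.
move=> pa s1.
pose m := (1 + \sum_(i < n) (a 0 i)^-1)^-1.
have S0 : 0 <= \sum_(i < n) (a 0 i)^-1 by rewrite sumr_ge0 // => i _; rewrite invr_ge0 ltW.
have m0 : 0 < m by rewrite invr_gt0 ltr_wpDr.
have mle : forall i, m <= a 0 i.
  move=> i; have ai := pa i.
  rewrite /m -[a 0 i]invrK lef_pV2 ?posrE ?invr_gt0 ?ltr_wpDr //.
  rewrite (bigD1 i) //= addrCA lerDl addr_ge0 // sumr_ge0 // => j _.
  by rewrite invr_ge0 ltW.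
pose c := (1 + s) / 2.
have c1 : 1 < c by rewrite /c; lra.
have cs : c < s by rewrite /c; lra.
have c00 : 0 < c by apply: lt_trans c1.
exists (m * (c - 1) / c); first by rewrite divr_gt0 // mulr_gt0 // subr_gt0.
move=> x hx.
have hxi : forall i, a 0 i / c < x 0 i /\ x 0 i <= c * a 0 i.
  move=> i; have := hx i; have ai := pa i; have mi := mle i.
  rewrite ltr_norml => /andP[h1 h2].
  have c0 : 0 < c by apply: lt_trans c1.
  have e1 : m * (c - 1) / c <= a 0 i * (c - 1) / c.
    by rewrite ler_pM2r ?invr_gt0 // ler_pM2r // subr_gt0.
  have e2 : a 0 i * (c - 1) / c = a 0 i - a 0 i / c by field; rewrite gt_eqF.
  have e3 : a 0 i / c * c = a 0 i by field; rewrite gt_eqF.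
  have e4 : a 0 i / c <= a 0 i by rewrite ler_pdivrMr // ler_peMr // ltW.
  split; nra.
have px : posv x.
  move=> i; have [h _] := hxi i; apply: lt_trans h.
  by rewrite divr_gt0 // ?pa // (lt_trans ltr01).
split => //.
apply: le_lt_trans cs; apply: T_le; first exact: ltW.
move=> i; have [h1 h2] := hxi i; have ai := pa i; have xi := px i.
have c0 : 0 < c by apply: lt_trans c1.
rewrite /Mi ge_max !ler_pdivrMr //.
rewrite h2 /=.
by move: h1; rewrite ltr_pdivrMr // mulrC => /ltW.
Qed.

Lemma stepA (A : set 'rV[R]_n) (l : 'rV[R]_n -> R) :
  {within A, continuous l} -> (forall x, A x -> 0 < l x) -> (forall x, A x -> posv x) ->
  forall th : R, 1 < th -> forall a, A a -> exists s : R, 1 < s /\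
  forall x, A x -> T x a < s ^+ 3 -> l x <= th * l a /\ l a <= th * l x.
Proof.
move=> cl lp Ap th th1 a Aa.
have la := lp a Aa.
have th0 : 0 < th by apply: lt_trans th1.
pose e := l a * (1 - th^-1).
have e0 : 0 < e.
  rewrite /e mulr_gt0 // subr_gt0 invf_lt1 //.
have [r r0 hr] := cont_pt cl Aa e0.
pose B := 1 + \sum_(i < n) a 0 i.
have pa := Ap a Aa.
have B1 : 1 <= B by rewrite /B lerDl sumr_ge0 // => i _; exact/ltW.
have Ble : forall i, a 0 i <= B.
  move=> i; rewrite /B (bigD1 i) //= addrCA lerDl addr_ge0 // sumr_ge0 // => j _.
  exact/ltW.
have B0 : 0 < B by apply: lt_le_trans B1.
pose d := Num.min 1 (r / (64 * B)).
have d0 : 0 < d by rewrite /d lt_min ltr01 divr_gt0 // mulr_gt0.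
have d1 : d <= 1 by rewrite /d ge_min lexx.
have dr : d * (64 * B) <= r.
  by rewrite -ler_pdivlMr ?mulr_gt0 // /d ge_min lexx orbT.
exists (1 + d); split; first by rewrite ltrDl.
move=> x Ax hT.
have px := Ap x Ax.
set u := (1 + d) ^+ 3 in hT.
have u1 : u <= 1 + 7 * d by rewrite /u; nra.
have hx : forall i, `|a 0 i - x 0 i| < r.
  move=> i; have [h1 h2] := T_small i px pa hT.
  have ai := pa i; have xi := px i; have bi := Ble i.
  have u0 : 1 <= u by rewrite /u exprn_ege1 // lerDl ltW.
  rewrite ltr_norml; apply/andP; split.
  -
    have : x 0 i - a 0 i < (u - 1) * a 0 i by nra.
    have : (u - 1) * a 0 i <= 7 * d * B by nra.
    nra.
  - have : a 0 i - x 0 i < (u - 1) * x 0 i by nra.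
    have : (u - 1) * x 0 i <= (u - 1) * u * a 0 i by nra.
    have : (u - 1) * u * a 0 i <= 7 * d * 8 * B.
      have g1 : (u - 1) * u <= 7 * d * 8 by nra.
      have g2 : 0 <= (u - 1) * u by nra.
      by apply: ler_pM => //; exact: ltW.
    nra.
have := hr x Ax hx; rewrite ltr_norml => /andP[g1 g2].
have hv : th * th^-1 = 1 by rewrite mulfV // gt_eqF.
have hv0 : 0 < th^-1 by rewrite invr_gt0.
rewrite /e in g1 g2.
split; nra.
Qed.

End Cont.

Section Expr.
Variables (R : realType) (n : nat).

Fixpoint sfpow (e : sfexpr R n) (N : nat) : sfexpr R n :=
  match N with 0 => SFConst _ 1 | S k => SFMul e (sfpow e k) end.

Definition sfsum (b : sfexpr R n) (es : seq (sfexpr R n)) := foldr (@SFAdd R n) b es.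

Definition kterm (N : nat) (a : 'rV[R]_n) (i : 'I_n) : sfexpr R n :=
  SFAdd (sfpow (SFDiv (SFVar _ i) (SFConst _ (a 0 i))) N)
        (sfpow (SFDiv (SFConst _ (a 0 i)) (SFVar _ i)) N).

Definition Dexpr (N : nat) (a : 'rV[R]_n) : sfexpr R n :=
  sfsum (SFConst _ 1) [seq kterm N a i | i <- index_enum 'I_n].

Definition nterm (N : nat) (l : 'rV[R]_n -> R) (a : 'rV[R]_n) :=
  SFDiv (SFConst _ (l a)) (Dexpr N a).
Definition dterm (N : nat) (a : 'rV[R]_n) :=
  SFDiv (SFConst _ 1) (Dexpr N a).

Definition Eexpr (N : nat) (l : 'rV[R]_n -> R) (p0 : 'rV[R]_n) (ps : seq 'rV[R]_n) :=
  SFDiv (sfsum (nterm N l p0) (map (nterm N l) ps))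
        (sfsum (dterm N p0) (map (dterm N) ps)).

Lemma eval_sfpow e N y : sf_eval (sfpow e N) y = sf_eval e y ^+ N.
Proof. by elim: N => [|N IH] //=; rewrite IH exprS. Qed.

Lemma eval_sfsum b es y :
  sf_eval (sfsum b es) y = sf_eval b y + \sum_(e <- es) sf_eval e y.
Proof.
elim: es => [|e es IH] /=; first by rewrite big_nil addr0.
by rewrite IH big_cons addrCA.
Qed.

Lemma pos_sfpow e N : sf_pos_consts e -> sf_pos_consts (sfpow e N).
Proof. by move=> h; elim: N => [|N IH] //=; rewrite ltr01. Qed.

Lemma pos_sfsum (I : eqType) b (g : I -> sfexpr R n) s : sf_pos_consts b ->
  (forall a, a \in s -> sf_pos_consts (g a)) -> sf_pos_consts (sfsum b (map g s)).
Proof.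
elim: s => [|e es IH] //= hb he; split.
  by apply: he; rewrite in_cons eqxx.
by apply: IH => // e' h; apply: he; rewrite in_cons h orbT.
Qed.

Lemma pos_Dexpr N a : posv a -> sf_pos_consts (Dexpr N a).
Proof.
move=> pa; apply: pos_sfsum => /=; first exact: ltr01.
move=> i _ /=; split; apply: pos_sfpow => /=; split => //.
Qed.

Lemma eval_Dexpr N a (x : 'rV[R]_n) : sf_eval (Dexpr N a) (fun i => x 0 i) = D N x a.
Proof.
rewrite /Dexpr eval_sfsum big_map /D /=; congr (_ + _).
by apply: eq_bigr => i _ /=; rewrite !eval_sfpow.
Qed.

Lemma pos_Eexpr N l p0 ps : (forall a, a \in p0 :: ps -> posv a /\ 0 < l a) ->
  sf_pos_consts (Eexpr N l p0 ps).
Proof.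
move=> h; have h0 := h p0 (mem_head _ _).
split; apply: pos_sfsum.
- by split; [exact: h0.2|exact: pos_Dexpr h0.1].
- move=> a ha; have := h a; rewrite in_cons ha orbT => /(_ isT) [pa la].
  by split; [exact: la|exact: pos_Dexpr].
- by split; [exact: ltr01|exact: pos_Dexpr h0.1].
- move=> a ha; have := h a; rewrite in_cons ha orbT => /(_ isT) [pa la].
  by split; [exact: ltr01|exact: pos_Dexpr].
Qed.

Lemma eval_Eexpr N l p0 ps (x : 'rV[R]_n) :
  sf_eval (Eexpr N l p0 ps) (fun i => x 0 i) =
  (\sum_(a <- p0 :: ps) l a * (D N x a)^-1) / (\sum_(a <- p0 :: ps) (D N x a)^-1).
Proof.
rewrite /Eexpr /= !eval_sfsum !big_map !big_cons /= !eval_Dexpr.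
congr ((_ + _) / (_ + _)); [|by rewrite div1r|]; apply: eq_bigr => j _; by rewrite eval_Dexpr ?div1r.
Qed.

End Expr.
Lemma params (R : realFieldType) (eps e k K et et0 : R) : 0 < eps -> 0 < e -> e <= eps / 8 -> e <= 1 / 8 ->
  0 <= k -> 0 <= K -> 0 <= et -> et <= et0 -> 0 < et0 ->
  et0 * (2 * (1 + eps) * (k * K + k + 1)) = eps ->
  (1 + e) * (1 + e) + k * K * et <= 1 + eps /\ (1 + e) * (1 + e) * (1 + k * et) <= 1 + eps.
Proof.
move=> e0 ep e1 e2 k0 K0 t0 tt t00 E.
set Z := et0 * (2 * (1 + eps)).
have Z0 : 0 <= Z by rewrite /Z; apply: mulr_ge0; [exact: ltW|lra].
have E' : Z * (k * K) + Z * k + Z = eps by rewrite -E /Z; ring.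
have kK0 : 0 <= k * K by rewrite mulr_ge0.
have h1 : Z * (k * K) <= eps by have := mulr_ge0 Z0 k0; lra.
have h2 : Z * k <= eps by have := mulr_ge0 Z0 kK0; lra.
have g1 : k * K * et <= k * K * et0 by rewrite ler_wpM2l.
have g2 : k * et <= k * et0 by rewrite ler_wpM2l.
have ps : (1 + e) * (1 + e) <= 1 + 3 * eps / 8 by nra.
have g3 : k * K * et0 <= eps / 2.
  have : k * K * et0 * (2 * (1 + eps)) <= eps by rewrite /Z in h1; nra.
  nra.
have g4 : k * et0 * (2 * (1 + eps)) <= eps by rewrite /Z in h2; nra.
have p1 : 1 <= (1 + e) * (1 + e) by nra.
split; first lra.
have g5 : 0 <= k * et by rewrite mulr_ge0.
nra.
Qed.

Section Final.
Variable R : realType.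

Lemma foldmin (I : eqType) (s : seq I) (g : I -> R) (c : R) : 1 < c ->
  (forall a, a \in s -> 1 < g a) ->
  1 < foldr (fun a m => Num.min (g a) m) c s /\
  forall a, a \in s -> foldr (fun a m => Num.min (g a) m) c s <= g a.
Proof.
move=> c1; elim: s => [|b s IH] hg /=; first by split.
have [h1 h2] : 1 < foldr (fun a m => Num.min (g a) m) c s /\
  forall a, a \in s -> foldr (fun a m => Num.min (g a) m) c s <= g a.
  by apply: IH => a ha; apply: hg; rewrite in_cons ha orbT.
split; first by rewrite lt_min h1 hg // in_cons eqxx.
move=> a; rewrite in_cons => /orP[/eqP->|ha]; first by rewrite ge_min lexx.
by rewrite ge_min h2 ?orbT.
Qed.

Lemma inv_le (a b c d : R) : 0 < a -> 0 < b -> 0 < d -> a * b <= c * d ->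
  d^-1 <= c / a * b^-1.
Proof.
move=> a0 b0 d0 h.
have e : c / a * b^-1 - d^-1 = (c * d - a * b) / (a * b * d).
  by field; rewrite !gt_eqF.
rewrite -subr_ge0 e divr_ge0 // ?subr_ge0 //.
by rewrite !mulr_ge0 // ltW.
Qed.

Lemma final (L S W a b eps : R) : 0 < L -> 0 < S -> 0 < W ->
  S <= a * L * W -> L * W <= b * S -> a <= 1 + eps -> b <= 1 + eps -> 0 < eps ->
  `|(L - S / W) / Num.min L (S / W)| <= eps.
Proof.
move=> L0 S0 W0 h1 h2 ha hb e0.
set f := S / W.
have f0 : 0 < f by rewrite divr_gt0.
have hS : S = f * W by rewrite /f divfK // gt_eqF.
have g1 : f <= a * L.
  by rewrite -(ler_pM2r W0) -hS.
have g2 : L <= b * f.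
  by rewrite -(ler_pM2r W0) -mulrA -hS.
rewrite minEle; case: ifP => hLf.
- set y := (L - f) / L.
  have hy : y * L = L - f by rewrite /y divfK // gt_eqF.
  rewrite ler_norml; apply/andP; split; nra.
- set y := (L - f) / f.
  have hy : y * f = L - f by rewrite /y divfK // gt_eqF.
  have hfL : f < L by rewrite ltNge hLf.
  rewrite ler_norml; apply/andP; split; nra.
Qed.

End Final.

Unset Implicit Arguments.
Theorem corollary4 (R : realType) (n : nat) (A : set 'rV[R]_n)
  (l : 'rV[R]_n -> R) :
  compact A -> log_convex A ->
  {within A, continuous l} -> (forall x, A x -> 0 < l x) ->
  forall eps : R, 0 < eps ->
  exists (p q : nat) (E : sfexpr R n),
    [/\ (0 < p)%N, (0 < q)%N, sf_pos_consts E &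
      forall x, A x ->
        let f := (sf_eval E (fun i => x 0 i `^ (q%:R^-1))) `^ (p%:R^-1) in
        `|(l x - f) / Num.min (l x) f| <= eps].
Proof.
move=> cA [Ap _] cl lp eps eps0.
pose e := Num.min eps 1 / 8.
have e0 : 0 < e by rewrite /e divr_gt0 // lt_min eps0 ltr01.
have e1 : e <= eps / 8 by rewrite /e ler_pM2r // ge_min lexx.
have e2 : e <= 1 / 8 by rewrite /e ler_pM2r // ge_min lexx orbT.
pose th := 1 + e.
have th1 : 1 < th by rewrite /th ltrDl.
have th0 : 0 < th by apply: lt_trans th1.
have H : forall a, exists s : R, A a -> 1 < s /\
    forall x, A x -> T x a < s ^+ 3 -> l x <= th * l a /\ l a <= th * l x.
  move=> a; case: (pselect (A a)) => [Aa|nA]; last by exists 0.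
  have [s hs] := stepA cl lp Ap th1 Aa; by exists s.
have [sf hsf] := choice H.
rewrite compact_cover in cA.
have covA : A `<=` cover A (fun a => interior [set x | T x a < sf a]).
  move=> x Ax; exists x => //.
  have [s1 _] := hsf x Ax.
  have [r r0 hr] := T_ball (Ap x Ax) s1.
  rewrite /interior /=; apply/nbhs_ballP; exists r => // y [_ hy].
  apply: (proj2 (hr y _)) => i; have := hy 0 i; by rewrite -ball_normE.
have [D' subD cov] := cA _ A (fun a => interior [set x | T x a < sf a])
  (fun a _ => @open_interior _ _) covA.
have memP : forall a : 'rV[R]_n, (a \in D') = (a \in enum_fset D') by [].
case hpts : (enum_fset D') => [|p0 ps].
  exists 1%N, 1%N, (SFConst _ 1); split => //; first exact: ltr01.
  move=> x Ax; have [a Da _] := cov x Ax.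
  by move: Da; rewrite /= memP hpts.
set pts := p0 :: ps.
have hA : forall a, a \in pts -> A a.
  by move=> a; rewrite /pts -hpts => /subD; rewrite in_setE.
have two1 : (1 : R) < 2 by lra.
have [sig1 sigle] := foldmin (g := sf) (s := pts) (c := 2) two1
  (fun a ha => (hsf a (hA a ha)).1).
set sig := foldr _ 2 pts in sig1 sigle.
pose k : R := (size pts)%:R.
have k0 : 0 <= k by [].
pose Lmax := \sum_(a <- pts) l a.
pose Lmin := (\sum_(a <- pts) (l a)^-1)^-1.
have Lmaxle : forall a, a \in pts -> l a <= Lmax.
  move=> a ha; apply: le_sum_seq => // j hj; exact/ltW/lp/hA.
have hs : forall a, a \in pts -> (l a)^-1 <= \sum_(j <- pts) (l j)^-1.
  move=> a ha; apply: (@le_sum_seq _ _ pts (fun j => (l j)^-1) a ha).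
  by move=> j hj; rewrite invr_ge0 ltW //; apply/lp/hA.
have Lmin0 : 0 < Lmin.
  rewrite /Lmin invr_gt0; apply: lt_le_trans (hs p0 (mem_head _ _)).
  by rewrite invr_gt0; apply/lp/hA/mem_head.
have Lminle : forall a, a \in pts -> Lmin <= l a.
  move=> a ha; have la := lp a (hA a ha).
  have S0 : 0 < \sum_(j <- pts) (l j)^-1 by rewrite -invr_gt0.
  rewrite /Lmin -[X in _ <= X]invrK lef_pV2 ?posrE ?invr_gt0 //.
  exact: hs.
have Lmax0 : 0 <= Lmax by apply: le_trans (Lmaxle p0 (mem_head _ _)); exact/ltW/lp/hA/mem_head.
pose K := th * Lmax / Lmin.
have K0 : 0 <= K by rewrite /K divr_ge0 ?mulr_ge0 // ltW.
pose et0 := eps / (2 * (1 + eps) * (k * K + k + 1)).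
have den0 : 0 < 2 * (1 + eps) * (k * K + k + 1).
  have : 0 <= k * K by rewrite mulr_ge0.
  move=> kK; rewrite !mulr_gt0 //; lra.
have et00 : 0 < et0 by rewrite divr_gt0.
have et0E : et0 * (2 * (1 + eps) * (k * K + k + 1)) = eps by rewrite /et0 divfK // gt_eqF.
have [N hN] := pow_big ((1 + 2 * n%:R) / et0) sig1.
pose et := (1 + 2 * (n%:R : R)) / sig ^+ N.
have sigN0 : 0 < sig ^+ N by rewrite exprn_gt0 // (lt_trans ltr01).
have c0 : 0 < 1 + 2 * (n%:R : R) by rewrite ltr_wpDr // mulr_ge0.
have et_ge0 : 0 <= et by rewrite /et divr_ge0 // ltW.
have et_le : et <= et0.
  move: hN; rewrite (ler_pdivrMr _ _ et00) => h.
  rewrite /et ler_pdivrMr //; by move: h; rewrite [sig ^+ N * _]mulrC.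
exists 1%N. exists 1%N. exists (Eexpr N l p0 ps). split => //.
  by apply: pos_Eexpr => a ha; split; [exact/Ap/hA|exact/lp/hA].
move=> x Ax; cbv zeta.
have px := Ap x Ax.
have -> : ((1%:R : R)^-1) = 1 by rewrite invr1.
have -> : (fun i => x 0 i `^ 1) = (fun i => x 0 i).
  by apply: funext => i; rewrite powRr1 // ltW // px.
have Dp : forall a, a \in pts -> 0 < (D N x a)^-1.
  move=> a ha; rewrite invr_gt0; apply: lt_le_trans ltr01 _.
  by apply: D_ge1 => //; apply/Ap/hA.
have Wp : 0 < \sum_(a <- pts) (D N x a)^-1.
  apply: lt_le_trans (Dp p0 (mem_head _ _)) _.
  by apply: (@le_sum_seq _ _ pts (fun a => (D N x a)^-1) p0 (mem_head _ _)) => j hj; apply/ltW/Dp.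
have Sp : 0 < \sum_(a <- pts) l a * (D N x a)^-1.
  have h0 : 0 < l p0 * (D N x p0)^-1 by rewrite mulr_gt0 //; [apply/lp/hA/mem_head|apply/Dp/mem_head].
  apply: lt_le_trans h0 _.
  apply: (@le_sum_seq _ _ pts (fun a => l a * (D N x a)^-1) p0 (mem_head _ _)) => j hj.
  by rewrite mulr_ge0 //; [apply/ltW/lp/hA|apply/ltW/Dp].
rewrite eval_Eexpr powRr1; last by rewrite divr_ge0 // ltW.
have [ai Dai hint] := cov x Ax.
have aip : ai \in pts by rewrite /pts -hpts.
have Aai := hA ai aip.
have [si1 hcont] := hsf ai Aai.
have Txa : T x ai < sf ai := interior_subset hint.
have pai := Ap ai Aai.
have lx := lp x Ax; have lai := lp ai Aai.
have [hx1 hx2] : l x <= th * l ai /\ l ai <= th * l x.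
  apply: hcont => //; apply: lt_le_trans Txa _.
  have s0 : 0 <= sf ai by apply/ltW/(lt_trans ltr01).
  rewrite -[leLHS]expr1; apply: ler_eXn2l => //; exact: ltW.
have hcls : forall j, j \in pts -> (l j <= th * th * l x /\ l x <= th * th * l j) \/ (D N x j)^-1 <= et * (D N x ai)^-1.
  move=> j hj; have Aj := hA j hj; have pj := Ap j Aj.
  case: (ltP (T x j) (sf ai ^+ 2)) => hTj.
  + left.
    have hT : T j ai < sf ai ^+ 3.
      apply: le_lt_trans (T_tri pj px pai) _.
      rewrite T_sym exprS mulrC.
      apply: ltr_pM => //; [exact/le_trans/T_ge1|exact/le_trans/T_ge1].
    have [hj1 hj2] := hcont j Aj hT.
    have lj := lp j Aj.
    split; nra.
  + right.
    rewrite /et; apply: inv_le => //.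
    * by apply: lt_le_trans ltr01 _; apply: D_ge1.
    * by apply: lt_le_trans ltr01 _; apply: D_ge1.
    * have s0 : 0 <= sf ai by apply/ltW/(lt_trans ltr01).
      have T0 : 0 <= T x ai by apply: le_trans (T_ge1 _ _).
      have h1 : D N x ai <= (1 + 2 * n%:R) * sf ai ^+ N.
        apply: le_trans (D_upper N px pai) _.
        have hp : T x ai ^+ N <= sf ai ^+ N.
          by apply: lerXn2r => //; exact: ltW.
        by rewrite ler_wpM2l // ltW.
      have h2 : sig ^+ N <= sf ai ^+ N.
        apply: lerXn2r => //; rewrite ?nnegrE ?sigle //; exact/ltW/(lt_trans ltr01).
      have h3 : (sf ai ^+ 2) ^+ N <= D N x j.
        apply: le_trans (D_lower N px pj); apply: lerXn2r => //; rewrite ?nnegrE //.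
          exact: exprn_ge0.
        exact: le_trans (T_ge1 _ _).
      have h4 : (sf ai ^+ 2) ^+ N = sf ai ^+ N * sf ai ^+ N by rewrite -exprM mulnC exprM expr2.
      have h5 : 0 <= sf ai ^+ N by exact: exprn_ge0.
      have h6 : 0 <= sig ^+ N by exact: ltW.
      have h7 : 0 <= D N x ai by apply: le_trans (D_ge1 N px pai).
      nra.
have hK : forall j, j \in pts -> l j <= K * l x.
  move=> j hj.
  have t1 : 1 <= th * l x / Lmin.
    rewrite ler_pdivlMr // mul1r; apply: le_trans (Lminle ai aip) hx2.
  have -> : K * l x = Lmax * (th * l x / Lmin) by rewrite /K; field; rewrite gt_eqF.
  apply: le_trans (Lmaxle j hj) _; exact: ler_peMr.
have hL : l x <= th * th * l ai.
  have : l ai <= th * l ai by rewrite ler_peMl // ltW.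
  nra.
have [c1 c2] := @core R _ pts (fun a => (D N x a)^-1) l (l x) (th * th) K et ai aip Dp
  (fun j hj => ltW (lp j (hA j hj))) lx et_ge0 K0 (mulr_ge0 (ltW th0) (ltW th0)) hcls hK hL.
have [pa1 pa2] := params eps0 e0 e1 e2 k0 K0 et_ge0 et_le et00 et0E.
exact: (final lx Sp Wp c1 c2).
Qed.
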